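(* Let $K$ be a totally real number field of degree $n$ and let $S\subseteq\mathbb{R}^n$ be a polytope of dimension $n-1$ whose vertices are images $\iota_M(\alpha)$ of elements $\alpha\in\mathcal{O}_K^+$. Suppose $S$ is contained in the hyperplane $\{x\in\mathbb{R}^n:\sum_{i=1}^n\tau_i(\delta)x_i=1\}$ for some $\delta\in\mathcal{O}_K^{\vee,+}$. Then $S\subseteq\mathcal{S}_K$.
   Context: $\tau_1,\dots,\tau_n$ are the real embeddings of $K$, $\iota_M:K\to\mathbb{R}^n$, $\alpha\mapsto(\tau_1(\alpha),\dots,\tau_n(\alpha))$, $\Lambda=\iota_M(\mathcal{O}_K)$. $\mathcal{O}_K^+$ is the set of totally positive elements of $\mathcal{O}_K$. The sail $\mathcal{S}_K$ is the boundary of the Klein polyhedron $\operatorname{Conv}(\Lambda\cap\mathbb{R}_{>0}^n)$. The codifferent is $\mathcal{O}_K^\vee=\{\delta\in K:\operatorname{Tr}_{K/\mathbb{Q}}(\delta\alpha)\in\mathbb{Z}\ \forall\alpha\in\mathcal{O}_K\}$ and $\mathcal{O}_K^{\vee,+}$ is the set of its totally positive elements. *)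

(* Defs.v *)
From HB Require Import structures.
From mathcomp Require Import all_boot all_order all_algebra all_field.
From mathcomp Require Import all_classical all_reals all_analysis.
Set Implicit Arguments. Unset Strict Implicit. Unset Printing Implicit Defensive.
Import Order.TTheory GRing.Theory Num.Theory.
Import numFieldNormedType.Exports.
Local Open Scope classical_set_scope.
Local Open Scope ring_scope.

Section NF.
Variables (R : realType) (K : fieldExtType rat) (n : nat).
Variable tau : 'I_n -> {rmorphism K -> R}.

(* tau_1,...,tau_n are exactly the real embeddings of the totally real field K of degree n *)
Definition totally_real_embeddings : Prop :=
  (\dim {:K} = n)%N /\ injective (fun i x => tau i x).

Definition integral (a : K) : Prop :=
  exists p : {poly int}, p \is monic /\ root (map_poly (fun z : int => z%:~R) p) a.

Definition trace (x : K) : R := \sum_(i < n) tau i x.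

Definition totally_positive (x : K) : Prop := forall i, 0 < tau i x.

Definition integral_pos (a : K) : Prop := integral a /\ totally_positive a.

Definition codifferent (d : K) : Prop :=
  forall a : K, integral a -> exists z : int, trace (d * a) = z%:~R.

Definition codifferent_pos (d : K) : Prop := codifferent d /\ totally_positive d.

Definition iotaM (a : K) : 'rV[R]_n := \row_i tau i a.

Definition Lambda : set 'rV[R]_n := [set iotaM a | a in integral].

Definition pos_orthant : set 'rV[R]_n := [set x | forall i, 0 < x ord0 i].

End NF.

Definition conv_hull (R : realType) (n : nat) (A : set 'rV[R]_n) : set 'rV[R]_n :=
  [set x | exists (m : nat) (p : 'I_m -> 'rV[R]_n) (w : 'I_m -> R),
      (forall j, A (p j)) /\ (forall j, 0 <= w j) /\ \sum_(j < m) w j = 1 /\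
      x = \sum_(j < m) w j *: p j].

Definition boundary (R : realType) (n : nat) (A : set 'rV[R]_n) : set 'rV[R]_n :=
  closure A `\` interior A.

Definition sail (R : realType) (K : fieldExtType rat) (n : nat)
  (tau : 'I_n -> {rmorphism K -> R}) : set 'rV[R]_n :=
  boundary (conv_hull (Lambda tau `&` @pos_orthant R n)).

Definition affine_rank (R : realType) (n m : nat) (p : 'I_m -> 'rV[R]_n)
  (j0 : 'I_m) : nat := \rank (\matrix_(j < m, i < n) (p j - p j0) ord0 i).

(* Main.v *)
Require Import Defs.
From HB Require Import structures.
From mathcomp Require Import all_boot all_order all_algebra all_field.
From mathcomp Require Import all_classical all_reals all_analysis.
Import Order.TTheory GRing.Theory Num.Theory.

Import numFieldNormedType.Exports.
Local Open Scope classical_set_scope.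
Local Open Scope ring_scope.

Lemma L_ge1 (R : realType) (K : fieldExtType rat) (n : nat)
  (tau : 'I_n -> {rmorphism K -> R}) (delta : K) (Hdelta : codifferent_pos tau delta)
  (n0 : (0 < n)%N) (y : 'rV[R]_n) :
  conv_hull (Lambda tau `&` @pos_orthant R n) y ->
  1 <= \sum_(i < n) tau i delta * y ord0 i.
Proof.
case=> k [p [w [Hp [Hw [Hs ->]]]]].
have -> : \sum_(i < n) tau i delta * (\sum_(j < k) w j *: p j) ord0 i
          = \sum_(j < k) w j * \sum_(i < n) tau i delta * p j ord0 i.
  under eq_bigr => i _ do rewrite summxE big_distrr /=.
  rewrite exchange_big /=; apply: eq_bigr => j _.
  rewrite big_distrr /=; apply: eq_bigr => i _.
  by rewrite mxE mulrCA.
rewrite -Hs; apply: ler_sum => j _.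
rewrite -[X in X <= _]mulr1; apply: ler_wpM2l => //.
have [[a Hint Hpa] Hpo] := Hp j.
case: Hdelta => Hcod Hdpos.
have [z Hz] := Hcod a Hint.
have Htr : trace tau (delta * a) = \sum_(i < n) tau i delta * p j ord0 i.
  rewrite /trace -Hpa; apply: eq_bigr => i _.
  by rewrite /iotaM mxE rmorphM.
have Hpos : 0 < \sum_(i < n) tau i delta * p j ord0 i.
  move: (p j) Hpo => q; rewrite /pos_orthant /=.
  case: n tau n0 Hdpos q {Hp y Htr Hz p Hpa Hcod} => // n' tau' _ Hd q Hq.
  rewrite big_ord_recl; apply: ltr_pwDl.
    by rewrite mulr_gt0.
  by apply: sumr_ge0 => i _; rewrite mulr_ge0 // ltW.
rewrite Htr in Hz.
rewrite Hz ler1z -gtz0_ge1 -(ltr0z R) -Hz //.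
Qed.

Theorem lemma2p9 (R : realType) (K : fieldExtType rat) (n : nat)
  (tau : 'I_n -> {rmorphism K -> R})
  (HK : totally_real_embeddings tau)
  (m : nat) (alpha : 'I_m -> K)
  (Halpha : forall j, integral_pos tau (alpha j))
  (j0 : 'I_m)
  (Hdim : affine_rank (fun j => iotaM tau (alpha j)) j0 = n.-1)
  (delta : K) (Hdelta : codifferent_pos tau delta)
  (Hplane : forall x, conv_hull [set iotaM tau (alpha j) | j in [set: 'I_m]] x ->
              \sum_(i < n) tau i delta * x ord0 i = 1) :
  conv_hull [set iotaM tau (alpha j) | j in [set: 'I_m]] `<=` sail tau.
Proof.
move=> x hx.
have Lx := Hplane x hx.
have n0 : (0 < n)%N.
  case: n tau delta Hdelta Hplane x hx Lx {HK Halpha Hdim} => // tau0 d _ _ x _.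
  by rewrite big_ord0 => /eqP; rewrite eq_sym oner_eq0.
have hC : conv_hull (Lambda tau `&` @pos_orthant R n) x.
  case: hx => k [p [w [Hp [Hw [Hs Hx]]]]].
  exists k, p, w; split; last by [].
  move=> j; have [l _ <-] := Hp j; split.
    by exists (alpha l) => //; case: (Halpha l).
  by move=> i; rewrite /iotaM mxE; case: (Halpha l) => _; apply.
split; first exact: subset_closure.
move=> /nbhs_ballP [e e0 Hb].
set v := x - (e / 2) *: const_mx 1.
have Bv : ball x e v.
  rewrite /v; change (0 < e /\ forall i j, ball (x i j) e ((x - (e / 2) *: const_mx 1) i j)).
  split => // i j; rewrite /ball /= !mxE mulr1 opprB addrC subrK.
  rewrite ger0_norm; first by rewrite ltr_pdivrMr // ltr_pMr // ltr1n.
  by rewrite divr_ge0 // ltW.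
have := @L_ge1 _ _ _ tau delta Hdelta n0 _ (Hb _ Bv).
have -> : \sum_(i < n) tau i delta * v ord0 i
   = \sum_(i < n) tau i delta * x ord0 i - e / 2 * \sum_(i < n) tau i delta.
  rewrite big_distrr -sumrB; apply: eq_bigr => i _.
  rewrite /v !mxE mulr1 mulrBr. by rewrite [_ * (e / 2)]mulrC.
rewrite Lx => H.
have Tpos : 0 < \sum_(i < n) tau i delta.
  case: Hdelta => _ Hd.
  clear -Hd n0; case: n tau delta Hd n0 => // n' tau' d Hd _.
  rewrite big_ord_recl; apply: ltr_pwDl => //.
  by apply: sumr_ge0 => i _; rewrite ltW.
have : 0 < e / 2 * \sum_(i < n) tau i delta by rewrite mulr_gt0 // divr_gt0.
move: H; set t := e / 2 * _ => H P.
have : 1 - t < 1 by rewrite ltrBlDr ltrDl.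
by rewrite ltNge H.
Qed.
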